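(* In the setting of the context, two elements of $\mathbb J'$ are $\mathbb J$-conjugate if and only if they are $\mathbb J'$-conjugate.
   Context: Fix a prime $p$. $\mathbb J$ is a finite group, $\mathbb J_1$ a normal subgroup of $\mathbb J$ with center $Z$, and $\mathbb J'$ a subgroup of $\mathbb J$ with $\mathbb J=\mathbb J'\mathbb J_1$ and $\mathbb J'\cap\mathbb J_1\subset Z$. Assume: (i) $\mathbb J_1$ is a $p$-group which is either extraspecial of class $2$ or abelian; (ii) $\mathbb J'=T\mathbb J'_1$ with $T$ an abelian subgroup of $\mathbb J'$ and $\mathbb J'_1$ a normal $p$-subgroup which is either extraspecial of class $2$ with center $Z'\supset\mathbb J'_1\cap T$, or abelian (then $Z':=\mathbb J'_1$); (iii) $[\mathbb J'_1,\mathbb J_1]=1$; (iv) $\mathbb J'/\mathbb J'_1$ has order prime to $p$; (v) $Z'Z$ is contained in the center of $\mathbb J$ and $\mathbb J'_1\mathbb J_1$ is an extraspecial $p$-group of class $2$ with center $Z'Z$. Let $\theta$ be a faithful character of $Z$ and $\theta'$ a faithful character of $Z'$ agreeing on $Z\cap Z'$. *)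

(* Defs.v *)
From HB Require Import structures.
From mathcomp Require Import all_boot all_order all_algebra all_fingroup all_solvable all_field all_character.
Set Implicit Arguments. Unset Strict Implicit. Unset Printing Implicit Defensive.

Import GroupScope.

(* A p-group H is "extraspecial of class 2" (in the generalized sense of the
   paper, where the centre need not have prime order): H is a non-abelian
   p-group of nilpotency class 2, i.e. [H,H] is contained in the centre Z(H),
   and H/Z(H) is an elementary abelian p-group. *)
Definition extraspecial2 (gT : finGroupType) (p : nat) (H : {group gT}) : bool :=
  [&& p.-group H, ~~ abelian H, [~: H, H] \subset 'Z(H)
    & p.-abelem (H / 'Z(H))].

(* Main.v *)
Require Import Defs.
From HB Require Import structures.
From mathcomp Require Import all_boot all_order all_algebra all_fingroup all_solvable all_field all_character.
Import GroupScope.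

Lemma key (gT : finGroupType) (p : nat) (J J1 J' J'1 : {group gT})
    (nJ1J : J1 <| J) (sJ'J : J' \subset J)
    (tiJ'J1 : J' :&: J1 \subset 'Z(J1)) (pJ1 : p.-group J1)
    (nJ'1J' : J'1 <| J') (cJ'1J1 : [~: J'1, J1] = 1)
    (p'J'J'1 : p^'.-nat #|J' : J'1|)
    (sZJ : 'Z(J1) \subset 'Z(J)) x j :
  x \in J' -> j \in J1 -> x ^ j \in J' -> x ^ j = x.
Proof.
move=> xJ' jJ1 xjJ'.
have xJ : x \in J by apply: (subsetP sJ'J).
set z := x^-1 * x ^ j.
have zJ1 : z \in J1.
  rewrite /z conjgE !mulgA groupMr // -mulgA -conjgE memJ_norm ?groupV //.
  by apply: (subsetP (normal_norm nJ1J)).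
have zJ' : z \in J' by rewrite /z groupM ?groupV.
have zZ : z \in 'Z(J) by apply: (subsetP sZJ); apply: (subsetP tiJ'J1); rewrite inE zJ' zJ1.
have cxz : commute x z.
  by move: zZ => /centerP [_ /(_ x xJ)].
have exj : x ^ j = x * z by rewrite /z mulKVg.
set m := #|J' : J'1|.
have nJ'1 := normal_norm nJ'1J'.
have xmJ'1 : x ^+ m \in J'1.
  apply: coset_idr; first by rewrite groupX // (subsetP nJ'1).
  rewrite morphX ?(subsetP nJ'1) // /m -card_quotient //.
  by apply: expg_cardG; apply: mem_quotient.
have cJ : J'1 \subset 'C(J1) by apply/commG1P.
have : (x ^+ m) ^ j = x ^+ m.
  apply/conjg_fixP; have := mem_commg xmJ'1 jJ1; rewrite cJ'1J1 => /set1P -> //.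
move=> h; have : (x * z) ^+ m = x ^+ m.
  by rewrite -exj -conjXg.
rewrite expgMn // -{2}(mulg1 (x ^+ m)) => /mulgI /eqP.
rewrite -order_dvdn => dzm.
have : coprime #[z] m.
  apply: (pnat_coprime (pi:=p)) => //.
  exact: mem_p_elt pJ1 zJ1.
rewrite /coprime (gcdn_idPl dzm) order_eq1 => /eqP z1.
by rewrite exj z1 mulg1.
Qed.

Theorem mainTheorem9 (gT : finGroupType) (p : nat) (pr_p : prime p)
    (J J1 J' T J'1 : {group gT})
    (* J1 normal in J; J = J' J1; J' ∩ J1 ⊆ Z := Z(J1) *)
    (nJ1J : J1 <| J) (sJ'J : J' \subset J) (defJ : J' * J1 = J)
    (tiJ'J1 : J' :&: J1 \subset 'Z(J1))
    (* (i) *)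
    (hJ1 : p.-group J1 /\ (extraspecial2 p J1 \/ abelian J1))
    (* (ii), with Z' := Z(J'1) (= J'1 when J'1 is abelian) *)
    (sTJ' : T \subset J') (abT : abelian T) (defJ' : T * J'1 = J')
    (nJ'1J' : J'1 <| J') (pJ'1 : p.-group J'1)
    (hJ'1 : extraspecial2 p J'1 \/ abelian J'1)
    (sJ'1TZ' : J'1 :&: T \subset 'Z(J'1))
    (* (iii) *)
    (cJ'1J1 : [~: J'1, J1] = 1)
    (* (iv) *)
    (p'J'J'1 : p^'.-nat #|J' : J'1|)
    (* (v) *)
    (sZ'ZJ : 'Z(J'1) * 'Z(J1) \subset 'Z(J))
    (esJ'1J1 : extraspecial2 p (J'1 <*> J1))
    (defZ : 'Z(J'1 <*> J1) = 'Z(J'1) * 'Z(J1))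
    (* faithful characters theta of Z and theta' of Z' agreeing on Z ∩ Z' *)
    (theta : 'CF('Z(J1))) (theta' : 'CF('Z(J'1)))
    (lin_theta : theta \is a linear_char) (ftheta : cfaithful theta)
    (lin_theta' : theta' \is a linear_char) (ftheta' : cfaithful theta')
    (agree : {in 'Z(J1) :&: 'Z(J'1), forall z, theta z = theta' z}) :
  forall x y, x \in J' -> y \in J' -> (y \in x ^: J) = (y \in x ^: J').
Proof.
move=> x y xJ' yJ'.
have sZJ : 'Z(J1) \subset 'Z(J).
  apply: subset_trans sZ'ZJ; apply/subsetP=> z zZ.
  by rewrite -[z]mul1g mem_mulg.
apply/idP/idP; last first.
  by case/imsetP=> g gJ' ->; apply/imsetP; exists g => //; apply: (subsetP sJ'J).
case/imsetP=> g gJ yE; move: gJ yJ'; rewrite yE -defJ => /mulsgP [a b aJ' bJ1 ->].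
rewrite conjgM => yJ''.
have xaJ' : x ^ a \in J' by rewrite groupJ.
have e := @key gT p J J1 J' J'1 nJ1J sJ'J tiJ'J1 hJ1.1 nJ'1J' cJ'1J1 p'J'J'1 sZJ _ _ xaJ' bJ1 yJ''.
apply/imsetP; exists a => //; exact: (esym e).
Qed.
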